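(* For every $n\ge1$ and $k\ge0$, the following identity holds in $\mathbb C[x_1,\dots,x_n]$: $z_{2k}=-\sum_{i=1}^{k}\sigma_{2i}\,z_{2k-2i}+\sigma_{2k+1}$, where $\sigma_p=\sum_{i_1<\dots<i_p}x_{i_1}\cdots x_{i_p}$ is the $p$-th elementary symmetric polynomial ($\sigma_p=0$ for $p>n$).
   Context: $U(\mathfrak h_n)$ is the associative superalgebra generated by odd elements $\xi_1,\dots,\xi_n$ with $\xi_i\xi_j+\xi_j\xi_i=0$ for $i\neq j$; $x_i=\xi_i^2$ are central. Let $T$ be the $\mathbb C[x_1,\dots,x_n]$-linear endomorphism of the free $\mathbb C[x_1,\dots,x_n]$-module with basis $\xi_1,\dots,\xi_n$ given by $T(\xi_j)=\sum_i t_{ij}\xi_i$ with $t_{ii}=0$, $t_{ij}=x_j$ for $i<j$, $t_{ij}=-x_j$ for $i>j$. Put $\phi_0=\sum_i\xi_i$, $\phi_k=T^k(\phi_0)$, and for $k\ge0$ let $z_{2k}=\frac12(\phi_0\phi_{2k}+\phi_{2k}\phi_0)$, which lies in $\mathbb C[x_1,\dots,x_n]$. *)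

(* Defs.v *)
From HB Require Import structures.
From mathcomp Require Import all_boot all_order all_algebra.
From mathcomp Require Import mpoly.
Set Implicit Arguments. Unset Strict Implicit. Unset Printing Implicit Defensive.
Import Order.TTheory GRing.Theory Num.Theory.
Local Open Scope ring_scope.

(* Concrete model of U(h_n): the free C[x_1..x_n]-module with basis the
   ordered monomials xi_S = xi_{s_1} ... xi_{s_k} (s_1 < ... < s_k, S a subset
   of {0..n-1}), with the multiplication induced by
   xi_i xi_j = - xi_j xi_i (i <> j) and xi_i^2 = x_i (central).
   An element is the function S |-> coefficient of xi_S. *)
Section Hn.
Variables (C : numClosedFieldType) (n : nat).

Definition UH := {ffun {set 'I_n} -> {mpoly C[n]}}.

(* sign of reordering xi_S xi_T: one transposition for every pair
   (i in S, j in T) with j < i *)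
Definition sgnST (S T : {set 'I_n}) : {mpoly C[n]} :=
  (-1) ^+ #|[set p : 'I_n * 'I_n | [&& p.1 \in S, p.2 \in T & (p.2 < p.1)%N]]|.

(* xi_S xi_T = sgnST S T * (prod_{i in S :&: T} x_i) * xi_(S symdiff T) *)
Definition mulUH (u v : UH) : UH :=
  [ffun U => \sum_(S : {set 'I_n}) \sum_(T : {set 'I_n} | (S :\: T) :|: (T :\: S) == U)
      sgnST S T * (\prod_(i in S :&: T) 'X_i) * u S * v T].

Definition addUH (u v : UH) : UH := [ffun U => u U + v U].

(* element sum_i a_i xi_i of the free module with basis xi_1..xi_n *)
Definition linUH (a : 'I_n -> {mpoly C[n]}) : UH :=
  [ffun U => \sum_(i : 'I_n | U == [set i]) a i].

(* the endomorphism T : T(xi_j) = sum_i t_ij xi_i, on coefficient vectors *)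
Definition tcoef (i j : 'I_n) : {mpoly C[n]} :=
  if (i < j)%N then 'X_j else if (j < i)%N then - 'X_j else 0.

Definition Tmap (a : 'I_n -> {mpoly C[n]}) : 'I_n -> {mpoly C[n]} :=
  fun i => \sum_(j : 'I_n) tcoef i j * a j.

Definition phicoef (k : nat) : 'I_n -> {mpoly C[n]} :=
  iter k Tmap (fun _ => 1).

Definition phi (k : nat) : UH := linUH (phicoef k).

Definition z2 (k : nat) : UH :=
  [ffun U => (2%:R ^-1 : C) *: addUH (mulUH (phi 0) (phi (2 * k)))
                                    (mulUH (phi (2 * k)) (phi 0)) U].

End Hn.

(* Main.v *)
Require Import Defs.
From HB Require Import structures.
From mathcomp Require Import all_boot all_order all_algebra.
From mathcomp Require Import mpoly.
Import Order.TTheory GRing.Theory Num.Theory.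
Local Open Scope ring_scope.

From mathcomp Require Import ring.
Set Implicit Arguments. Unset Strict Implicit.


Section Tele.
Variables (R : comNzRingType) (n : nat) (y : nat -> R).
Definition Rt i := \prod_(0 <= j < i) (1 - y j) * \prod_(i <= j < n) (1 + y j).
Definition ut i := \prod_(0 <= j < i) (1 - y j) * \prod_(i.+1 <= j < n) (1 + y j).

Lemma ut1 i : (i < n)%N -> ut i * (1 + y i) = Rt i.
Proof. move=> hi; rewrite /Rt /ut (big_ltn (F := fun j => 1 + y j) hi); ring. Qed.

Lemma ut2 i : (i < n)%N -> ut i * (1 - y i) = Rt i.+1.
Proof. by move=> hi; rewrite /Rt /ut big_nat_recr //= mulrAC. Qed.

Lemma yut i : (i < n)%N -> (y i * ut i) *+ 2 = Rt i - Rt i.+1.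
Proof.
move=> hi; rewrite -(ut1 hi) -(ut2 hi); move: (ut i) (y i) => a b; ring.
Qed.

Lemma ut2n i : (i < n)%N -> (ut i) *+ 2 = Rt i + Rt i.+1.
Proof.
move=> hi; rewrite -(ut1 hi) -(ut2 hi); move: (ut i) (y i) => a b; ring.
Qed.

Lemma sum_yut m p : (m <= p)%N -> (p <= n)%N ->
  \sum_(m <= j < p) (y j * ut j) *+ 2 = Rt m - Rt p.
Proof.
move=> mp pn; rewrite (telescope_sumr_eq (fun k => - Rt k)) //.
  by rewrite opprK addrC.
move=> k /andP[_ kp]; rewrite yut; first by rewrite opprK addrC.
exact: leq_trans kp pn.
Qed.

Lemma identL : \sum_(0 <= j < n) (y j * ut j) *+ 2 = Rt 0 - Rt n.
Proof. by rewrite sum_yut. Qed.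

Lemma identK i : (i < n)%N ->
  ut i *+ 2 - \sum_(i.+1 <= j < n) (y j * ut j) *+ 2
    + \sum_(0 <= j < i) (y j * ut j) *+ 2 = Rt 0 + Rt n.
Proof.
move=> hi; rewrite (@sum_yut i.+1 n) // (@sum_yut 0 i) ?(ltnW hi) // ut2n //.
move: (Rt 0) (Rt n) (Rt i) (Rt i.+1) => a b c d; ring.
Qed.
End Tele.


Lemma coef_prod1 (R : comNzRingType) (I : finType) (c : I -> R) p :
  (\prod_(i : I) (1 + (c i)%:P * 'X))`_p =
  \sum_(J : {set I} | #|J| == p) \prod_(i in J) c i.
Proof.
rewrite (eq_bigr (fun i => (c i)%:P * 'X + 1)) => [|i _]; last by rewrite addrC.
rewrite (@bigA_distr _ 0 1 *%R +%R) coef_sum [RHS]big_mkcond /=.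
apply: eq_bigr => J _; rewrite -big_mkcond /= big_split /= prodr_const.
rewrite -rmorph_prod coefCM coefXn.
by case: eqP => [->|]; rewrite ?eqxx ?mulr1 // => /nesym/eqP/negbTE->; rewrite mulr0.
Qed.


Lemma even_sum (V : zmodType) (F : nat -> V) k :
  (forall l, odd l -> F l = 0) ->
  \sum_(l < (2 * k)%N.+1) F l = \sum_(i < k.+1) F (2 * i)%N.
Proof.
move=> Fo; elim: k => [|k IH]; first by rewrite !big_ord1.
rewrite (_ : (2 * k.+1).+1 = ((2 * k).+1).+2); last by rewrite mulnS.
rewrite big_ord_recr /= big_ord_recr /= IH Fo; last by rewrite /= oddM.
by rewrite addr0 [in RHS]big_ord_recr /= mulnS.
Qed.

Section Main.
Variables (C : numClosedFieldType) (n' : nat).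
Local Notation n := n'.+1.
Local Notation R := {mpoly C[n]}.

Definition xv (j : nat) : R := 'X_(inord j).
Definition yv (j : nat) : {poly R} := (xv j)%:P * 'X.
Definition Uv (j : nat) : {poly R} := ut n yv j *+ 2.
Definition Pp := Rt n yv 0.
Definition Qq := Rt n yv n.

Lemma K_ord (i : 'I_n) :
  Uv i - 'X * \sum_(j : 'I_n) (tcoef C i j)%:P * Uv j = Pp + Qq.
Proof.
rewrite /Pp /Qq -(identK yv (ltn_ord i)).
have E : \sum_(j : 'I_n) (tcoef C i j)%:P * Uv j
    = \sum_(0 <= m < n) (tcoef C i (inord m))%:P * Uv m.
  by rewrite big_mkord; apply: eq_bigr => j _; rewrite inord_val.
have hi := ltn_ord i.
rewrite E (@big_cat_nat _ _ _ i 0 n) // ?(ltnW hi) // (big_ltn hi) /=.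
have t1 : \sum_(0 <= m < i) (tcoef C i (inord m))%:P * Uv m
   = \sum_(0 <= m < i) - ((xv m)%:P * Uv m).
  apply: eq_big_nat => m /andP[_ hm].
  rewrite /tcoef (inordK (ltn_trans hm hi)) ltnNge (ltnW hm) /=.
  by rewrite hm rmorphN mulNr.
have t2 : (tcoef C i (inord i))%:P * Uv i = 0.
  by rewrite inord_val /tcoef ltnn /= polyC0 mul0r.
have t3 : \sum_(i.+1 <= m < n) (tcoef C i (inord m))%:P * Uv m
   = \sum_(i.+1 <= m < n) (xv m)%:P * Uv m.
  apply: eq_big_nat => m /andP[hm hm2].
  by rewrite /tcoef (inordK hm2) hm; reflexivity.
rewrite t1 t2 t3 add0r !mulrDr sumrN mulrN !mulr_sumr.
have s1 : forall a b, \sum_(a <= m < b) 'X * ((xv m)%:P * Uv m)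
   = \sum_(a <= m < b) (yv m * ut n yv m) *+ 2.
  move=> a b; apply: eq_bigr => m _; rewrite /Uv /yv.
  move: (ut _ _ _) ((xv m)%:P) => u c; ring.
rewrite !s1 /Uv.
move: (ut _ _ _) (\sum_(0 <= j < i) _) (\sum_(i.+1 <= j < n) _) => u s t; ring.
Qed.

Lemma L_ord : \sum_(j < n) yv j * Uv j = Pp - Qq.
Proof.
rewrite /Pp /Qq -(identL n yv) big_mkord; apply: eq_bigr => m _.
by rewrite /Uv mulrnAr.
Qed.

Lemma Ueq (i : 'I_n) :
  Uv i = Pp + Qq + 'X * \sum_(j : 'I_n) (tcoef C i j)%:P * Uv j.
Proof. by move: (K_ord i) => /eqP; rewrite subr_eq => /eqP. Qed.

Lemma phicoefS s (i : 'I_n) :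
  phicoef C s.+1 i = \sum_(j : 'I_n) tcoef C i j * phicoef C s j.
Proof. reflexivity. Qed.

Lemma coefU m (i : 'I_n) :
  (Uv i)`_m = \sum_(l < m.+1) (Pp + Qq)`_l * phicoef C (m - l) i.
Proof.
elim: m i => [|m IH] i.
  rewrite Ueq coefD mulrC coefMX /= addr0 big_ord1 /=.
  rewrite mulr1; reflexivity.
rewrite Ueq coefD mulrC coefMX /= coef_sum [RHS]big_ord_recr /= subnn.
rewrite addrC; congr (_ + _); first by rewrite /phicoef /= mulr1.
under eq_bigr do rewrite coefCM IH.
rewrite [RHS](eq_bigr (fun l : 'I_m.+1 => (Pp + Qq)`_l *
   \sum_(j : 'I_n) tcoef C i j * phicoef C (m - l) j)); last first.
  move=> l _; rewrite (subSn (ltn_ord l : (l <= m)%N)) phicoefS; reflexivity.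
under eq_bigr do rewrite mulr_sumr.
under [RHS]eq_bigr do rewrite mulr_sumr.
rewrite exchange_big /=; apply: eq_bigr => l _; apply: eq_bigr => j _.
rewrite mulrCA; reflexivity.
Qed.

Lemma Pp_coef p : Pp`_p = mesym n C p.
Proof.
rewrite /Pp /Rt big_geq // mul1r big_mkord.
rewrite (eq_bigr (fun j : 'I_n => 1 + ('X_j)%:P * 'X)); last first.
  by move=> j _; rewrite /yv /xv inord_val.
by rewrite coef_prod1.
Qed.

Lemma Qq_coef p : Qq`_p = (-1) ^+ p * mesym n C p.
Proof.
rewrite /Qq /Rt [X in _ * X]big_geq // mulr1 big_mkord.
rewrite (eq_bigr (fun j : 'I_n => 1 + (- 'X_j)%:P * 'X)); last first.
  by move=> j _; rewrite /yv /xv inord_val rmorphN mulNr.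
rewrite coef_prod1 /mesym mulr_sumr; apply: eq_bigr => J /eqP hJ.
by rewrite prodrN hJ.
Qed.

Definition zeta s : R := \sum_(j : 'I_n) 'X_j * phicoef C s j.

Lemma mul2K (p : R) : (2%:R^-1 : C) *: (p *+ 2) = p.
Proof.
rewrite -scalerMnr scalerMnl -mulr_natr mulVf ?scale1r //.
by rewrite pnatr_eq0.
Qed.

Lemma zeta_id k :
  \sum_(i < k.+1) mesym n C (2 * i) * zeta (2 * k - 2 * i)%N = mesym n C (2 * k + 1).
Proof.
have H := congr1 (fun p : {poly R} => p`_(2 * k)%N.+1) L_ord.
rewrite /= coefB Pp_coef Qq_coef coef_sum in H.
have E : forall j : 'I_n, (yv j * Uv j)`_(2 * k)%N.+1 =
    \sum_(l < (2 * k)%N.+1) 'X_j * ((Pp + Qq)`_l * phicoef C (2 * k - l)%N j).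
  by move=> j; rewrite /yv -mulrA coefCM [_ * Uv j]mulrC coefMX /= /xv inord_val coefU mulr_sumr.
rewrite (eq_bigr _ (fun j _ => E j)) in H.
rewrite exchange_big /= in H.
have E2 : forall l : 'I_(2 * k)%N.+1, \sum_(j < n) 'X_j * ((Pp + Qq)`_l * phicoef C (2 * k - l)%N j)
   = (1 + (-1) ^+ l) * mesym n C l * zeta (2 * k - l)%N.
  move=> l; rewrite coefD Pp_coef Qq_coef /zeta [RHS]mulr_sumr; apply: eq_bigr => j _.
  ring.
rewrite (eq_bigr _ (fun l _ => E2 l)) in H.
rewrite (even_sum (F := fun l => (1 + (-1) ^+ l) * mesym n C l * zeta (2 * k - l)%N)) in H;
  last first.
  by move=> l ol; rewrite -signr_odd ol expr1 addrN !mul0r.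
have E3 : (-1) ^+ (2 * k)%N.+1 = - 1 :> R.
  by rewrite -signr_odd /= oddM /= expr1.
rewrite addn1. rewrite E3 mulN1r opprK in H.
apply: (can_inj (@mul2K)).
rewrite /= [RHS]mulr2n -H -sumrMnl; apply: eq_bigr => i _.
rewrite exprM sqrrN expr1n.
by rewrite expr1n -mulrA mulrDl mul1r mulr2n.
Qed.

Lemma sum_set1 (G : {set 'I_n} -> R) (a : 'I_n -> R) :
  \sum_(S : {set 'I_n}) (\sum_(i | S == [set i]) a i) * G S
  = \sum_(i : 'I_n) a i * G [set i].
Proof.
under eq_bigr do rewrite mulr_suml big_mkcond /=.
rewrite exchange_big /=; apply: eq_bigr => i _.
by rewrite -big_mkcond /= big_pred1_eq.
Qed.

Lemma sgn1 (i j : 'I_n) :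
  sgnST C [set i] [set j] = if (j < i)%N then -1 else 1.
Proof.
rewrite /sgnST; case: ltnP => h.
  rewrite (_ : [set p : 'I_n * 'I_n | _] = [set (i, j)]) ?cards1 ?expr1 //.
  apply/setP => -[p1 p2]; rewrite !inE /= xpair_eqE.
  by case: eqP => [->|] //=; case: eqP => [->|] //=; rewrite h.
rewrite (_ : [set p : 'I_n * 'I_n | _] = set0) ?cards0 ?expr0 //.
apply/setP => -[p1 p2]; rewrite !inE /=.
case: eqP => [->|] //=; case: eqP => [->|] //=; by rewrite ltnNge h.
Qed.

Definition gg (U S T : {set 'I_n}) : R :=
  ((S :\: T) :|: (T :\: S) == U)%:R * sgnST C S T * \prod_(i in S :&: T) 'X_i.

Lemma gg_sym U (i j : 'I_n) :
  gg U [set i] [set j] + gg U [set j] [set i] = ((i == j) && (U == set0))%:R * 'X_i *+ 2.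
Proof.
rewrite /gg; case: (eqVneq i j) => [<-|hij] /=.
  rewrite setDv setU0 setIid big_set1 sgn1 ltnn eq_sym mulr2n; ring.
have E : [set i] :&: [set j] = set0.
  apply/setP => x; rewrite !inE; case: eqP => // ->; by rewrite (negbTE hij).
rewrite E setIC E big_set0 setUC !sgn1.
case: ltngtP hij => h hij'; last by rewrite (val_inj h) eqxx in hij'. all: rewrite mul0r mul0rn; move: (_%:R) => c; rewrite !mulr1 ?mulrN1 ?addNr ?addrN; reflexivity.
Qed.

Lemma mul_expand (a b : 'I_n -> R) U :
  mulUH (linUH a) (linUH b) U = \sum_i a i * \sum_j b j * gg U [set i] [set j].
Proof.
rewrite /mulUH ffunE.
transitivity (\sum_(S : {set 'I_n}) (\sum_(i | S == [set i]) a i) *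
   \sum_(T : {set 'I_n}) (\sum_(j | T == [set j]) b j) * gg U S T).
  apply: eq_bigr => S _; rewrite big_mkcond mulr_sumr; apply: eq_bigr => T _.
  rewrite !ffunE /gg; case: (_ == U) => /=.
    move: (sgnST _ _ _) (\prod_(i in _) _) (\sum_(i | _) a i) (\sum_(i | _) b i) => x y z w.
    ring.
  rewrite !mul0r !mulr0; reflexivity.
rewrite sum_set1; under eq_bigr => i _ do rewrite sum_set1.
reflexivity.
Qed.

Lemma mul_lin (a b : 'I_n -> R) U :
  mulUH (linUH a) (linUH b) U + mulUH (linUH b) (linUH a) U
  = \sum_i a i * b i * ((U == set0)%:R * 'X_i *+ 2).
Proof.
rewrite !mul_expand.
have E1 : \sum_i b i * \sum_j a j * gg U [set i] [set j]
    = \sum_i \sum_j a i * b j * gg U [set j] [set i].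
  under eq_bigr do rewrite mulr_sumr.
  rewrite exchange_big /=; apply: eq_bigr => i _; apply: eq_bigr => j _.
  move: (gg _ _ _) => g; ring.
rewrite E1; under eq_bigr do rewrite mulr_sumr.
rewrite -big_split /=; apply: eq_bigr => i _.
rewrite -big_split /= (bigD1 i) //= big1 => [|j hj].
  by rewrite addr0 mulrA -mulrDr gg_sym eqxx.
rewrite mulrA -mulrDr gg_sym eq_sym (negbTE hj) /= mul0r mul0rn mulr0; reflexivity.
Qed.

Lemma phicoef0 (i : 'I_n) : phicoef C 0 i = 1.
Proof. reflexivity. Qed.

Lemma z2E k U : z2 C n k U = (U == set0)%:R * zeta (2 * k).
Proof.
rewrite /z2 ffunE /addUH ffunE /phi mul_lin.
rewrite -[X in _ = X]mul2K; congr (_ *: _).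
rewrite /zeta mulr_sumr -sumrMnl; apply: eq_bigr => i _.
rewrite phicoef0; move: (phicoef _ _ _) => p; move: (_%:R) => c; ring.
Qed.

End Main.

Unset Implicit Arguments. Set Strict Implicit.

(* z_{2k} = - sum_{i=1}^k sigma_{2i} z_{2k-2i} + sigma_{2k+1}, an identity in
   U(h_n) whose right-hand side lies in C[x] (embedded as scalar multiples of 1
   = xi_set0); componentwise on the basis xi_U. *)
Theorem lemma5p4 (C : numClosedFieldType) (n k : nat) (hn : (1 <= n)%N) :
  z2 C n k =
  [ffun U : {set 'I_n} =>
     - (\sum_(1 <= i < k.+1) mesym n C (2 * i) * z2 C n (k - i) U)
     + (U == set0)%:R * mesym n C (2 * k + 1)].
Proof.
case: n hn => // n' _.
apply/ffunP => U; rewrite z2E ffunE.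
under eq_bigr do rewrite z2E.
case: eqP => h1 /=.
  rewrite !mulr1n !mul1r -zeta_id big_ord_recl /= mesym0E muln0 subn0 mul1r.
  rewrite big_add1 /= big_mkord.
  rewrite [X in _ + (_ + X)](eq_bigr (fun i : 'I_k => mesym n'.+1 C (2 * i.+1) * (1 * zeta C n' (2 * (k - i.+1))))).
    rewrite addrCA addNr addr0; reflexivity.
  move=> i _; rewrite /bump /= mulnBr mul1r; reflexivity.
rewrite !mulr0n !mul0r addr0 big1 ?oppr0 // => i _.
by rewrite mul0r mulr0.
Qed.
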